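(* Let $R$ be a commutative ring with $\mathbb{Q}\subseteq R$, $\mathcal{A}$ a commutative unital $R$-algebra, and $\mathcal{E}$ a finitely generated projective $\mathcal{A}$-module with a symmetric, strongly nondegenerate, full $\mathcal{A}$-bilinear form $\langle\cdot,\cdot\rangle$. Let $\mathsf{C}_1\in\mathcal{C}^r(\mathcal{E})$ and $\mathsf{C}_2\in\mathcal{C}^s(\mathcal{E})$ with $r,s\ge1$. Then for all $x_1,\dots,x_{r+s-1}\in\mathcal{E}$: $$(\mathsf{C}_1\wedge\mathsf{C}_2)(x_1,\dots,x_{r+s-1})=(-1)^{rs}\sum_{\pi\in\mathrm{Sh}(r,s-1)}\operatorname{sign}(\pi)\,\langle\mathsf{C}_1(x_{\pi(1)},\dots,x_{\pi(r-1)}),x_{\pi(r)}\rangle\,\mathsf{C}_2(x_{\pi(r+1)},\dots,x_{\pi(r+s-1)})$$ $$\qquad+\sum_{\pi\in\mathrm{Sh}(s,r-1)}\operatorname{sign}(\pi)\,\langle\mathsf{C}_2(x_{\pi(1)},\dots,x_{\pi(s-1)}),x_{\pi(s)}\rangle\,\mathsf{C}_1(x_{\pi(s+1)},\dots,x_{\pi(r+s-1)}).$$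
   Context: Strongly nondegenerate: $\mathcal{E}\to\operatorname{Hom}_{\mathcal{A}}(\mathcal{E},\mathcal{A})$ is an isomorphism. Full: every $a\in\mathcal{A}$ is a finite sum $\sum_i\langle x_i,y_i\rangle$. $\operatorname{Der}(\mathcal{A})$: $R$-linear derivations of $\mathcal{A}$. $\mathcal{C}^0(\mathcal{E})=\mathcal{A}$ and $\mathcal{C}^1(\mathcal{E})=\mathcal{E}$. An element of $\mathcal{C}^1$ is regarded as a map with zero arguments; for $y\in\mathcal{E}$, $y()=y$. For $r\ge2$, $\mathcal{C}^r(\mathcal{E})$ is the set of $\mathsf{C}\in\operatorname{Hom}_R(\mathcal{E}^{\otimes_R(r-1)},\mathcal{E})$ admitting an $R$-multilinear symbol $\sigma_{\mathsf{C}}:\mathcal{E}^{\otimes(r-2)}\to\operatorname{Der}(\mathcal{A})$ with two properties: (1) $\sigma_{\mathsf{C}}(x_1,\dots,x_{r-2})\langle u,w\rangle=\langle\mathsf{C}(x_1,\dots,x_{r-2},u),w\rangle+\langle u,\mathsf{C}(x_1,\dots,x_{r-2},w)\rangle$; (2) for $r\ge3$ and $1\le i\le r-2$, $\langle\mathsf{C}(\dots,x_i,x_{i+1},\dots)+\mathsf{C}(\dots,x_{i+1},x_i,\dots),u\rangle=\sigma_{\mathsf{C}}(x_1,\dots,\widehat{x_i},\widehat{x_{i+1}},\dots,x_{r-1},u)\langle x_i,x_{i+1}\rangle$. $i_x\mathsf{C}$ inserts $x$ in the first argument. $[\cdot,\cdot]$ is the unique $R$-bilinear graded skew-symmetric map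 $\mathcal{C}^r\times\mathcal{C}^s\to\mathcal{C}^{r+s-2}$ with: - $[a,b]=0$ and $[a,x]=0=[x,a]$; - $[x,y]=\langle x,y\rangle$; - $[\mathsf{D},a]=\sigma_{\mathsf{D}}(a)=-[a,\mathsf{D}]$ for $\mathsf{D}\in\mathcal{C}^2$; - $[\mathsf{C},x]=i_x\mathsf{C}=(-1)^{r+1}[x,\mathsf{C}]$ for $\mathsf{C}\in\mathcal{C}^r$ with $r\ge2$; - $[[\mathsf{C}_1,\mathsf{C}_2],x]=(-1)^s[[\mathsf{C}_1,x],\mathsf{C}_2]+[\mathsf{C}_1,[\mathsf{C}_2,x]]$. $\wedge$ is the unique degree-$0$ $R$-bilinear product with $a\wedge b=ab$, $a\wedge x=ax=x\wedge a$, and $[\mathsf{C}_1\wedge\mathsf{C}_2,x]=(-1)^s[\mathsf{C}_1,x]\wedge\mathsf{C}_2+\mathsf{C}_1\wedge[\mathsf{C}_2,x]$. $\mathrm{Sh}(p,q)$ denotes the set of $(p,q)$-shuffles: permutations $\pi$ of $\{1,\dots,p+q\}$ with $\pi(1)<\dots<\pi(p)$ and $\pi(p+1)<\dots<\pi(p+q)$. *)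

(* Defs.v *)
From HB Require Import structures.
From mathcomp Require Import all_boot all_order all_algebra perm.
Set Implicit Arguments. Unset Strict Implicit. Unset Printing Implicit Defensive.
Import Order.TTheory GRing.Theory.
Local Open Scope ring_scope.

Section Cochains.
Variables (R : comNzRingType) (A : comAlgType R) (E : lmodType A).
Variable form : E -> E -> A.

Definition rsc (c : R) (u : E) : E := (c%:A) *: u.

Definition is_derivation (D : A -> A) : Prop :=
  (forall (c : R) (a b : A), D (c *: a + b) = c *: D a + D b) /\
  (forall a b : A, D (a * b) = D a * b + a * D b).

(* An element of C^r, r >= 2, is a map C on (r-1)-lists of elements of E;
   only its values on lists of size r-1 are relevant.
   An element of C^1 = E is a map with zero arguments: y() = y, i.e. the
   vector is C [::]. *)
Definition in_C (r : nat) (C : seq E -> E) : Prop :=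
  match r with
  | r'.+2 =>
    (forall (pre post : seq E) (c : R) (u v : E),
        size pre + size post = r' ->
        C (pre ++ (rsc c u + v) :: post) =
          rsc c (C (pre ++ u :: post)) + C (pre ++ v :: post)) /\
    exists sigma : seq E -> A -> A,
      (forall xs : seq E, size xs = r' -> is_derivation (sigma xs)) /\
      (forall (pre post : seq E) (c : R) (u v : E) (a : A),
          size pre + (size post).+1 = r' ->
          sigma (pre ++ (rsc c u + v) :: post) a =
            c *: sigma (pre ++ u :: post) a + sigma (pre ++ v :: post) a) /\
      (forall (xs : seq E) (u w : E), size xs = r' ->
          sigma xs (form u w) = form (C (rcons xs u)) w + form u (C (rcons xs w))) /\
      (* property (2), for pairs of adjacent positions (i, i+1), 1 <= i <= r-2 *)
      (forall (pre post : seq E) (a b u : E),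
          size pre + (size post).+2 = r'.+1 ->
          form (C (pre ++ a :: b :: post) + C (pre ++ b :: a :: post)) u =
            sigma (pre ++ rcons post u) (form a b))
  | _ => True
  end.

(* Cochains of arbitrary degree: Sc a is a in C^0 = A, Vc r f is f in C^r
   (r >= 1). *)
Inductive cochain : Type :=
  | Sc of A
  | Vc of nat & (seq E -> E).

Definition deg (c : cochain) : nat :=
  match c with Sc _ => 0%N | Vc r _ => r end.

(* [c, x] : for c in C^0, [a,x] = 0; for c = y in C^1, [y,x] = <y,x>;
   for C in C^r, r >= 2, [C,x] = i_x C (insertion in the first argument). *)
Definition brx (c : cochain) (x : E) : cochain :=
  match c with
  | Sc _ => Sc 0
  | Vc 0 _ => Sc 0
  | Vc 1 f => Sc (form (f [::]) x)
  | Vc r.+2 f => Vc r.+1 (fun xs => f (x :: xs))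
  end.

(* Evaluation of the wedge product c1 /\ c2 (of degree deg c1 + deg c2 >= 1)
   at the argument list xs, determined by
     a /\ x = a x = x /\ a   (degree 1 case), and
     [C1 /\ C2, x] = (-1)^s [C1, x] /\ C2 + C1 /\ [C2, x]  (s = deg C2),
   where [C, x] = i_x C inserts x as first argument. *)
Fixpoint wedge_ev (c1 c2 : cochain) (xs : seq E) {struct xs} : E :=
  match xs with
  | [::] =>
    match c1, c2 with
    | Sc a, Vc 1 f => a *: f [::]
    | Vc 1 f, Sc a => a *: f [::]
    | _, _ => 0
    end
  | x :: xs' =>
    ((-1) ^+ deg c2) *: wedge_ev (brx c1 x) c2 xs' + wedge_ev c1 (brx c2 x) xs'
  end.

End Cochains.

(* (p, n-p)-shuffles of {0, ..., n-1} (0-based version of Sh(p, q)) *)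
Definition is_shuffle (n p : nat) (pi : 'S_n) : bool :=
  [forall i : 'I_n, forall j : 'I_n,
     ((i < j)%N && ((j < p)%N || (p <= i)%N)) ==> (pi i < pi j)%N].

(* x at a natural-number index (0 outside range) *)
Definition at_nat (T : nmodType) (n : nat) (x : 'I_n -> T) (i : nat) : T :=
  match @insub nat (fun k => (k < n)%N) _ i with
  | Some j => x j
  | None => 0
  end.

(* the list [x_{pi(k+1)}, ..., x_{pi(k+m)}] (1-based), i.e. 0-based
   indices k, ..., k+m-1 *)
Definition xs_pi (T : nmodType) (n : nat) (x : 'I_n -> T) (pi : 'S_n)
  (k m : nat) : seq T :=
  [seq at_nat (fun i => x (pi i)) j | j <- iota k m].

(* Main.v *)
Require Import Defs.
From HB Require Import structures.
From mathcomp Require Import all_boot all_order all_algebra perm zify.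
Import GRing.Theory.
Local Open Scope ring_scope.
Set Implicit Arguments. Unset Strict Implicit. Unset Printing Implicit Defensive.


Lemma reindex_lift_perm (V : nmodType) n (i0 j0 : 'I_n.+1) (G : 'S_n.+1 -> V) :
  \sum_(s : 'S_n.+1 | s i0 == j0) G s = \sum_(s : 'S_n) G (lift_perm i0 j0 s).
Proof.
rewrite (reindex (lift_perm i0 j0)); last first.
  pose ulsf i (s : 'S_n.+1) k := odflt k (unlift (s i) (s (lift i k))).
  have ulsfK i (s : 'S_n.+1) k: lift (s i) (ulsf i s k) = s (lift i k).
    rewrite /ulsf; have:= neq_lift i k.
    by rewrite -(can_eq (permK s)) => /unlift_some[] ? ? ->.
  have inj_ulsf: injective (ulsf i0 _).
    move=> s; apply: can_inj (ulsf (s i0) s^-1%g) _ => k'.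
    by rewrite {1}/ulsf ulsfK !permK liftK.
  exists (fun s => perm (inj_ulsf s)) => [s _ | s].
    by apply/permP=> k'; rewrite permE /ulsf lift_perm_lift lift_perm_id liftK.
  move/(s _ =P _) => si0; apply/permP=> k.
  case: (unliftP i0 k) => [k'|] ->; rewrite ?lift_perm_id //.
  by rewrite lift_perm_lift -si0 permE ulsfK.
by apply: eq_bigl => s; rewrite lift_perm_id eqxx.
Qed.

Lemma is_shuffleP n p (pi : 'S_n) :
  reflect (forall i j : 'I_n, (i < j)%N -> (j < p)%N || (p <= i)%N -> (pi i < pi j)%N)
          (is_shuffle p pi).
Proof.
apply: (iffP forallP) => [H i j lij hp | H i].
  by have /forallP /(_ j) := H i; rewrite lij hp.
by apply/forallP => j; apply/implyP => /andP[] /H; apply.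
Qed.

Lemma lift_perm_shuffle n p (i0 : 'I_n.+1) (s : 'S_n) :
  is_shuffle p (lift_perm i0 ord0 s) =
  if (i0 == 0 :> nat) && (0 < p)%N then is_shuffle p.-1 s
  else if (i0 == p :> nat) then is_shuffle p s else false.
Proof.
have LP := lift_perm_lift i0 ord0 s; have LI := lift_perm_id i0 ord0 s.
have lsh (k : 'I_n) : nat_of_ord (lift (@ord0 n) k) = k.+1 by [].
have bumpv (k : 'I_n) : nat_of_ord (lift i0 k) = if (k < i0)%N then nat_of_ord k else (nat_of_ord k).+1.
  by rewrite /= /bump; case: ltnP => h; rewrite ?add0n ?add1n.
case: ifP => [/andP[/eqP i00 p0] | Hne].
  have E0 : i0 = ord0 by apply: val_inj.
  subst i0.
  apply/is_shuffleP/is_shuffleP => H i j lij hp.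
    have h1 : (lift ord0 i < lift ord0 j)%N by rewrite !lsh ltnS.
    have h2 : (lift ord0 j < p)%N || (p <= lift ord0 i)%N.
      by rewrite !lsh; case: (p) p0 hp => // p' _ /=; rewrite !ltnS.
    by have := H _ _ h1 h2; rewrite !LP !lsh ltnS.
  case: (unliftP ord0 i) => [i'|] Ei; subst i.
    case: (unliftP ord0 j) => [j'|] Ej; subst j; last by [].
    rewrite !LP !lsh ltnS; apply: H; first by move: lij; rewrite !lsh ltnS.
    by move: hp; rewrite !lsh; case: (p) p0 => // p' _ /=; rewrite !ltnS.
  rewrite LI; case: (unliftP ord0 j) => [j'|] Ej; subst j; last by rewrite ltnn in lij.
  by rewrite LP lsh.
case: ifP => [/eqP i0p | i0p].
  apply/is_shuffleP/is_shuffleP => H i j lij hp.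
    have h1 : (lift i0 i < lift i0 j)%N by rewrite !bumpv; do 2 case: ifP => ?; lia.
    have h2 : (lift i0 j < p)%N || (p <= lift i0 i)%N by rewrite !bumpv; do 2 case: ifP => ?; lia.
    by have := H _ _ h1 h2; rewrite !LP !lsh ltnS.
  case: (unliftP i0 i) => [i'|] Ei; subst i.
    case: (unliftP i0 j) => [j'|] Ej; subst j.
      rewrite !LP !lsh ltnS; apply: H.
        by move: lij; rewrite !bumpv; do 2 case: ifP => ?; lia.
      by move: hp lij; rewrite !bumpv; do 2 case: ifP => ?; lia.
    by exfalso; move: hp lij; rewrite !bumpv; case: ifP => ?; lia.
  rewrite LI; case: (unliftP i0 j) => [j'|] Ej; subst j; last by rewrite ltnn in lij.
  by rewrite LP lsh.
apply/negP => /is_shuffleP H.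
have i0n0 : (0 < i0)%N.
  by case: (posnP i0) => // i00; move: Hne i0p; rewrite i00 /=; case: (p).
case: (ltnP i0 p) => hip.
  have := H ord0 i0 i0n0; rewrite hip LI => /(_ isT); by [].
have pn : (p < n.+1)%N by apply: (leq_ltn_trans hip).
have hlt : (p < i0)%N by rewrite ltn_neqAle hip andbT eq_sym i0p.
have := H (Ordinal pn) i0 hlt; rewrite LI leqnn orbT => /(_ isT); by [].
Qed.

Lemma sum_shuffleS (V : nmodType) n p (F : 'S_n.+1 -> V) :
  \sum_(pi | is_shuffle p.+1 pi) F pi =
  \sum_(s : 'S_n | is_shuffle p s) F (lift_perm ord0 ord0 s) +
  (if (p.+1 <= n)%N then
     \sum_(s : 'S_n | is_shuffle p.+1 s) F (lift_perm (inord p.+1) ord0 s) else 0).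
Proof.
set G := fun pi : 'S_n.+1 => if is_shuffle p.+1 pi then F pi else 0.
transitivity (\sum_(i0 : 'I_n.+1) \sum_(pi : 'S_n.+1 | pi i0 == ord0) G pi).
  rewrite big_mkcond /=.
  under [RHS]eq_bigr => i0 _ do rewrite big_mkcond /=.
  rewrite exchange_big /=; apply: eq_bigr => pi _.
  rewrite (bigD1 ((pi^-1)%g ord0)) //= permKV eqxx big1 ?addr0 //.
  move=> i0 hi0; case: eqP => // hpi; case/eqP: hi0.
  by rewrite -hpi permK.
under eq_bigr => i0 _ do rewrite reindex_lift_perm.
rewrite /G.
under eq_bigr => i0 _ do under eq_bigr => s _ do rewrite lift_perm_shuffle.
rewrite (bigD1 ord0) //=; congr (_ + _).
  by rewrite [RHS]big_mkcond.
case: ifP => hp.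
  have hne : (inord p.+1 : 'I_n.+1) != ord0.
    by rewrite -val_eqE /= inordK.
  rewrite (bigD1 (inord p.+1)) //= [X in _ + X = _]big1 ?addr0; last first.
    move=> i0 /andP[h1 h2]; apply: big1 => s _.
    have -> : (i0 == 0 :> nat) = false by apply/negP => /eqP h; case/eqP: h1; apply: val_inj.
    have -> : (i0 == p.+1 :> nat) = false.
      apply/negP => /eqP h; case/eqP: h2; apply: val_inj; rewrite /= h inordK //.
    by [].
  rewrite [RHS]big_mkcond; apply: eq_bigr => s _.
  by rewrite inordK // eqxx.
rewrite big1 // => i0 h1; apply: big1 => s _.
have -> : (i0 == 0 :> nat) = false by apply/negP => /eqP h; case/eqP: h1; apply: val_inj.
have -> : (i0 == p.+1 :> nat) = false.
  by apply/negP => /eqP h; have := ltn_ord i0; rewrite h ltnS hp.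
by [].
Qed.

Lemma shuffle0_id n (s : 'S_n) : is_shuffle 0 s -> s = 1%g.
Proof.
move=> /is_shuffleP H.
have mono : forall i j : 'I_n, (i < j)%N -> (s i < s j)%N by move=> i j h; apply: H.
have ge' : forall m (k : 'I_n), nat_of_ord k = m -> (k <= s k)%N.
  elim=> [|m IH] k hk; first by rewrite hk.
  have hm : (m < n)%N by rewrite (leq_trans _ (ltn_ord k)) // hk.
  have h2 := IH (Ordinal hm) erefl.
  have h1 := mono (Ordinal hm) k; rewrite hk /= ltnSn in h1.
  by rewrite hk; apply: (leq_ltn_trans h2); apply: h1.
have ge : forall i : 'I_n, (i <= s i)%N by move=> i; apply: ge' erefl.
have sumeq : (\sum_(i : 'I_n) (s i : nat) = \sum_(i : 'I_n) (i : nat))%N.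
  by rewrite [RHS](reindex_inj (@perm_inj _ s)).
apply/permP => i; apply: val_inj; rewrite perm1 /=.
apply/eqP; rewrite eqn_leq ge andbT.
move: sumeq; rewrite (bigD1 i) //= [X in _ = X](bigD1 i) //= => sumeq.
have hle : (\sum_(j < n | j != i) (j : nat) <= \sum_(j < n | j != i) (s j : nat))%N.
  by apply: leq_sum => j _; apply: ge.
have : (s i + \sum_(j < n | j != i) (s j : nat) <= i + \sum_(j < n | j != i) (s j : nat))%N.
  by rewrite sumeq leq_add2l.
by rewrite leq_add2r.
Qed.

Lemma is_shuffle0 n (s : 'S_n) : is_shuffle 0 s = (s == 1%g).
Proof.
apply/idP/eqP => [/shuffle0_id // | ->].
by apply/is_shuffleP => i j h _; rewrite !perm1.
Qed.

Lemma at_natE (T : nmodType) n (y : 'I_n -> T) j (h : (j < n)%N) :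
  at_nat y j = y (Ordinal h).
Proof. by rewrite /at_nat insubT. Qed.

Lemma at_nat0 (T : nmodType) n (y : 'I_n -> T) j : (n <= j)%N -> at_nat y j = 0.
Proof. by move=> h; rewrite /at_nat insubF // ltnNge h. Qed.

Lemma at_nat_lift (T : nmodType) n (x : 'I_n.+1 -> T) (i0 : 'I_n.+1) (s : 'S_n) j :
  at_nat (fun i => x (lift_perm i0 ord0 s i)) j =
  if j == i0 then x ord0 else at_nat (fun i => x (lift ord0 (s i))) (unbump i0 j).
Proof.
case: (ltnP j n.+1) => hj.
  rewrite (at_natE _ hj); case: (unliftP i0 (Ordinal hj)) => [k|] Ek.
    have -> : (j == i0) = false.
      by apply/negP => /eqP h; move: (neq_lift i0 k); rewrite -Ek -val_eqE /= h eqxx.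
    have -> : unbump i0 j = k by rewrite (_ : j = lift i0 k) ?bumpK // -Ek.
    rewrite Ek lift_perm_lift (at_natE _ (ltn_ord k)) /=; do 3 f_equal; exact: val_inj.
  have -> : (j == i0) = true by rewrite -Ek /= eqxx.
  by rewrite Ek lift_perm_id.
have -> : (j == i0) = false.
  by apply/negP => /eqP h; move: (ltn_ord i0); rewrite -h ltnNge hj.
rewrite !at_nat0 //.
rewrite /unbump; have : (i0 < j)%N by apply: (leq_trans (ltn_ord i0)).
by move=> ->; rewrite subn1; lia.
Qed.

Section XsPi.
Variables (T : nmodType) (n : nat) (x : 'I_n.+1 -> T).
Let x' := fun i : 'I_n => x (lift ord0 i).

Lemma at_nat_A (s : 'S_n) j :
  at_nat (fun i => x (lift_perm ord0 ord0 s i)) j.+1 = at_nat (fun i => x' (s i)) j.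
Proof. by rewrite at_nat_lift /= /unbump /= subn1. Qed.

Lemma at_nat_A0 (s : 'S_n) :
  at_nat (fun i => x (lift_perm ord0 ord0 s i)) 0 = x ord0.
Proof. by rewrite at_nat_lift. Qed.

Lemma xs_pi_A (s : 'S_n) k m :
  xs_pi x (lift_perm ord0 ord0 s) k.+1 m = xs_pi x' s k m.
Proof.
rewrite /xs_pi (_ : iota k.+1 m = map S (iota k m)); last by rewrite -add1n iotaDl.
by rewrite -map_comp; apply: eq_map => j /=; rewrite at_nat_A.
Qed.

Lemma xs_pi_A0 (s : 'S_n) m :
  xs_pi x (lift_perm ord0 ord0 s) 0 m.+1 = x ord0 :: xs_pi x' s 0 m.
Proof. by rewrite -xs_pi_A /xs_pi /= at_nat_A0. Qed.

Lemma at_nat_B p (s : 'S_n) j : (p <= n)%N -> (j < p)%N ->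
  at_nat (fun i => x (lift_perm (inord p) ord0 s i)) j = at_nat (fun i => x' (s i)) j.
Proof.
move=> hp hj; rewrite at_nat_lift inordK ?ltnS //.
have -> : (j == p) = false by rewrite ltn_eqF.
by rewrite /unbump ltnNge (ltnW hj) subn0.
Qed.

Lemma at_nat_B' p (s : 'S_n) j : (p <= n)%N -> (p < j)%N ->
  at_nat (fun i => x (lift_perm (inord p) ord0 s i)) j = at_nat (fun i => x' (s i)) j.-1.
Proof.
move=> hp hj; rewrite at_nat_lift inordK ?ltnS //.
have -> : (j == p) = false by rewrite gtn_eqF.
by rewrite /unbump hj subn1.
Qed.

Lemma xs_pi_B p (s : 'S_n) k m : (p <= n)%N -> (k + m <= p)%N ->
  xs_pi x (lift_perm (inord p) ord0 s) k m = xs_pi x' s k m.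
Proof.
move=> hp hkm; rewrite /xs_pi; apply/eq_in_map => j; rewrite mem_iota => /andP[_ hj].
by apply: at_nat_B => //; apply: (leq_trans hj).
Qed.

Lemma xs_pi_B0 p (s : 'S_n) m : (p <= n)%N ->
  xs_pi x (lift_perm (inord p) ord0 s) p m.+1 = x ord0 :: xs_pi x' s p m.
Proof.
move=> hp; rewrite /xs_pi /= at_nat_lift inordK ?ltnS // eqxx; congr (_ :: _).
rewrite (_ : iota p.+1 m = map S (iota p m)); last by rewrite -add1n iotaDl.
rewrite -map_comp; apply/eq_in_map => j; rewrite mem_iota => /andP[h1 _] /=.
by rewrite at_nat_B' // ltnS.
Qed.

End XsPi.

Lemma xs_pi_id (T : nmodType) n (y : 'I_n -> T) :
  xs_pi y 1%g 0 n = [seq y i | i <- enum 'I_n].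
Proof.
rewrite /xs_pi -val_enum_ord -map_comp; apply: eq_map => i /=.
by rewrite (at_natE _ (ltn_ord i)) perm1; congr y; apply: val_inj.
Qed.

Section Wedge.
Variables (R : comNzRingType) (A : comAlgType R) (E : lmodType A).
Variable form : E -> E -> A.

Lemma wedge_Sc0 xs : forall c, wedge_ev form (Sc E 0) c xs = 0 /\ wedge_ev form c (Sc E 0) xs = 0.
Proof.
elim: xs => [|y xs IH] c.
  by case: c => [a|[|[|r]] f] //=; rewrite scale0r.
split => /=.
  by rewrite (proj1 (IH _)) (proj1 (IH _)) scaler0 addr0.
by rewrite (proj2 (IH _)) (proj2 (IH _)) scaler0 addr0.
Qed.

Lemma wedge_ScV a xs : forall s (f : seq E -> E), size xs = s ->
  wedge_ev form (Sc E a) (Vc s.+1 f) xs = a *: f xs.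
Proof.
elim: xs => [|y xs IH] s f /= hs; first by rewrite -hs.
rewrite (proj1 (wedge_Sc0 _ _)) scaler0 add0r.
by case: s hs => // s [hs]; rewrite IH.
Qed.

Lemma wedge_VSc a xs : forall r (f : seq E -> E), size xs = r ->
  wedge_ev form (Vc r.+1 f) (Sc E a) xs = a *: f xs.
Proof.
elim: xs => [|y xs IH] r f /= hs; first by rewrite -hs.
rewrite (proj2 (wedge_Sc0 _ _)) addr0 expr0 scale1r.
by case: r hs => // r [hs]; rewrite IH.
Qed.
End Wedge.

Section Main.
Variables (R : comNzRingType) (A : comAlgType R) (E : lmodType A).
Variable form : E -> E -> A.

Definition Fgen (C1 C2 : seq E -> E) r s n (x : 'I_n -> E) (pi : 'S_n) : E :=
  ((-1) ^+ odd_perm pi * form (C1 (xs_pi x pi 0 r)) (at_nat (fun i => x (pi i)) r))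
    *: C2 (xs_pi x pi r.+1 s).

Definition Ssum (C1 C2 : seq E -> E) r s n (x : 'I_n -> E) : E :=
  \sum_(pi : 'S_n | is_shuffle r.+1 pi) Fgen C1 C2 r s x pi.

Section Step.
Variables (n : nat) (x : 'I_n.+1 -> E).
Let x' := fun i : 'I_n => x (lift ord0 i).

Lemma FA C1 C2 r s (σ : 'S_n) :
  Fgen C1 C2 r.+1 s x (lift_perm ord0 ord0 σ) = Fgen (fun ys => C1 (x ord0 :: ys)) C2 r s x' σ.
Proof.
by rewrite /Fgen odd_lift_perm /= xs_pi_A0 at_nat_A xs_pi_A.
Qed.

Lemma FA0 C1 C2 s (σ : 'S_n) :
  Fgen C1 C2 0 s x (lift_perm ord0 ord0 σ) =
  ((-1) ^+ odd_perm σ * form (C1 [::]) (x ord0)) *: C2 (xs_pi x' σ 0 s).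
Proof. by rewrite /Fgen odd_lift_perm /= at_nat_A0 xs_pi_A. Qed.

Lemma FB C1 C2 r s (σ : 'S_n) : (r.+1 <= n)%N ->
  Fgen C1 C2 r s.+1 x (lift_perm (inord r.+1) ord0 σ) =
  (-1) ^+ r.+1 *: Fgen C1 (fun ys => C2 (x ord0 :: ys)) r s x' σ.
Proof.
move=> hr; rewrite /Fgen odd_lift_perm inordK ?ltnS // addbF signr_addb.
rewrite xs_pi_B // ?add0n // at_nat_B // xs_pi_B0 //.
by rewrite signr_odd scalerA !mulrA.
Qed.

Lemma Ssum_rec C1 C2 r s :
  Ssum C1 C2 r s x =
  \sum_(σ : 'S_n | is_shuffle r σ) Fgen C1 C2 r s x (lift_perm ord0 ord0 σ) +
  (if (r.+1 <= n)%N then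
     \sum_(σ : 'S_n | is_shuffle r.+1 σ) Fgen C1 C2 r s x (lift_perm (inord r.+1) ord0 σ)
   else 0).
Proof. exact: sum_shuffleS. Qed.

Lemma sum_shuffle0 (V : nmodType) m (G : 'S_m -> V) :
  \sum_(σ : 'S_m | is_shuffle 0 σ) G σ = G 1%g.
Proof.
by rewrite (eq_bigl (fun σ => σ == 1%g)) ?big_pred1_eq // => σ; rewrite is_shuffle0.
Qed.

Lemma partA_S C1 C2 r s :
  \sum_(σ : 'S_n | is_shuffle r.+1 σ) Fgen C1 C2 r.+1 s x (lift_perm ord0 ord0 σ) =
  Ssum (fun ys => C1 (x ord0 :: ys)) C2 r s x'.
Proof. by apply: eq_bigr => σ _; rewrite FA. Qed.

Lemma partA_0 C1 C2 s :
  \sum_(σ : 'S_n | is_shuffle 0 σ) Fgen C1 C2 0 s x (lift_perm ord0 ord0 σ) =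
  form (C1 [::]) (x ord0) *: C2 (xs_pi x' 1%g 0 s).
Proof. by rewrite sum_shuffle0 FA0 odd_perm1 mul1r. Qed.

Lemma partB C1 C2 r s : (r.+1 <= n)%N ->
  \sum_(σ : 'S_n | is_shuffle r.+1 σ) Fgen C1 C2 r s.+1 x (lift_perm (inord r.+1) ord0 σ) =
  (-1) ^+ r.+1 *: Ssum C1 (fun ys => C2 (x ord0 :: ys)) r s x'.
Proof. by move=> h; rewrite scaler_sumr; apply: eq_bigr => σ _; rewrite FB. Qed.

End Step.

Lemma sgn_eq (a b : nat) : odd a = odd b -> (-1) ^+ a = (-1) ^+ b :> A.
Proof. by move=> h; rewrite -signr_odd h signr_odd. Qed.

Lemma main_gen n : forall r s (C1 C2 : seq E -> E) (x : 'I_n -> E), (r + s).+1 = n ->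
  wedge_ev form (Vc r.+1 C1) (Vc s.+1 C2) [seq x i | i <- enum 'I_n] =
  (-1) ^+ (r.+1 * s.+1) *: Ssum C1 C2 r s x + Ssum C2 C1 s r x.
Proof.
elim: n => [|n IH] r s C1 C2 x // [hn].
set x' := fun i : 'I_n => x (lift ord0 i).
have hxs : [seq x i | i <- enum 'I_n.+1] = x ord0 :: [seq x' i | i <- enum 'I_n].
  by rewrite enum_ordSl /= -map_comp.
have hsz : size [seq x' i | i <- enum 'I_n] = n by rewrite size_map size_enum_ord.
rewrite hxs /= (Ssum_rec _ C1 C2) (Ssum_rec _ C2 C1).
case: r hn => [|r] hn; case: s hn => [|s] hn.
-
  rewrite /= in hn; subst n.
  rewrite /= wedge_ScV // wedge_VSc // !partA_0 !xs_pi_id /=.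
  by rewrite !addr0.
-
  move: hn; rewrite add0n => hn; subst n.
  rewrite /= wedge_ScV // IH // partA_0 partA_S partB // ltnn addr0 xs_pi_id /x'.
  rewrite !mul1n scalerDr scalerA -exprD (@sgn_eq (s.+2 + 1) s.+1); last first.
    by rewrite addn1 /= negbK.
  by rewrite addrA.
-
  move: hn; rewrite addn0 => hn; subst n.
  rewrite /= wedge_VSc // IH ?addn0 // partA_0 partA_S ltnn addr0 partB // xs_pi_id /x'.
  rewrite !muln1 scalerDr scalerA -exprD (@sgn_eq (1 + r.+1) r.+2) //.
  by rewrite addrAC -addrA.
-
  rewrite /= IH; last by rewrite -hn addSn.
  rewrite IH; last by rewrite -hn addnS.
  have h1 : (r.+1 < n)%N by rewrite -hn; lia.
  have h2 : (s.+1 < n)%N by rewrite -hn; lia.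
  rewrite !partA_S h1 h2 !partB //.
  rewrite /x' !scalerDr !scalerA -!exprD -mulSn (@sgn_eq (r.+2 * s.+1) (r.+2 * s.+2 + r.+2)); last first.
    by rewrite !(oddD, oddM) /=; case: (odd r); case: (odd s).
  by rewrite addrACA [X in _ + X = _]addrC.
Qed.
End Main.

Unset Implicit Arguments.



Theorem mainTheorem11
  (R : comNzRingType) (A : comAlgType R) (E : lmodType A)
  (form : E -> E -> A)
  (* Q is contained in R: every positive integer is invertible in R *)
  (hQ : forall n : nat, exists y : R, (n.+1)%:R * y = 1)
  (* E is finitely generated projective: a direct summand of A^n *)
  (hproj : exists (n : nat) (i : E -> 'rV[A]_n) (p : 'rV[A]_n -> E),
      (forall (a : A) (x y : E), i (a *: x + y) = a *: i x + i y) /\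
      (forall (a : A) (u v : 'rV[A]_n), p (a *: u + v) = a *: p u + p v) /\
      (forall x : E, p (i x) = x))
  (* <.,.> is A-bilinear *)
  (hbil_l : forall (a : A) (x y z : E), form (a *: x + y) z = a * form x z + form y z)
  (hbil_r : forall (a : A) (x y z : E), form z (a *: x + y) = a * form z x + form z y)
  (* symmetric *)
  (hsym : forall x y : E, form x y = form y x)
  (* strongly nondegenerate: x |-> <x, .> is a bijection E -> Hom_A(E, A) *)
  (hnd_inj : forall x y : E, (forall z, form x z = form y z) -> x = y)
  (hnd_surj : forall f : E -> A,
      (forall (a : A) (x y : E), f (a *: x + y) = a * f x + f y) ->
      exists x : E, forall z, form x z = f z)
  (* full *)
  (hfull : forall a : A, exists s : seq (E * E), a = \sum_(q <- s) form q.1 q.2)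
  (r s : nat) (hr : (1 <= r)%N) (hs : (1 <= s)%N)
  (C1 C2 : seq E -> E)
  (hC1 : in_C form r C1) (hC2 : in_C form s C2)
  (x : 'I_(r + s - 1) -> E) :
  wedge_ev form (Vc r C1) (Vc s C2) [seq x i | i <- enum 'I_(r + s - 1)] =
    (-1) ^+ (r * s) *:
      \sum_(pi : 'S_(r + s - 1) | is_shuffle r pi)
        ((-1) ^+ odd_perm pi *
           form (C1 (xs_pi x pi 0 (r - 1))) (at_nat (fun i => x (pi i)) (r - 1)))
          *: C2 (xs_pi x pi r (s - 1))
    + \sum_(pi : 'S_(r + s - 1) | is_shuffle s pi)
        ((-1) ^+ odd_perm pi *
           form (C2 (xs_pi x pi 0 (s - 1))) (at_nat (fun i => x (pi i)) (s - 1)))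
          *: C1 (xs_pi x pi s (r - 1)).
Proof.
Proof.
move: x hC1 hC2; case: r hr => [//|r] _; case: s hs => [//|s] _ x _ _.
have hn : (r + s).+1 = (r.+1 + s.+1 - 1)%N by rewrite addSn addnS subn1.
rewrite (@main_gen R A E form (r.+1 + s.+1 - 1) r s C1 C2 x hn) /Ssum /Fgen.
by rewrite [(r.+1 - 1)%N]subn1 [(s.+1 - 1)%N]subn1.
Qed.
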